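(* Assume the user paths are pairwise edge-disjoint, and let $a\ge2$ be an integer. Let $E^*$ be an $s$-$t$ path maximizing $\Lambda(\cdot,P)$ over all directed $s$-$t$ paths, with $d$ edges. If $I\ge\lceil\log_ad\rceil$, the Generalized Recursive Greedy algorithm returns an $s$-$t$ path $E_{\mathbf{f}}$ with $\Lambda(E_{\mathbf{f}},P)\ge\frac{1}{\lceil\log_ad\rceil+1}\Lambda(E^*,P)$.
   Context: $G=(V,E)$ is a simple directed acyclic graph with capacities $C\in\mathbb{R}_{\ge0}^E$, $s,t\in V$ joined by a directed path, budget $0<\gamma\le\min_eC(e)$. User paths $P=\{p_1,\dots,p_k\}$ are directed paths (edge sets) with initial values $\lambda_i\ge0$, $\sum_{i:e\in p_i}\lambda_i\le C(e)$. For $A\subseteq E$, $T(A,P)$ is the optimal value of: maximize $\sum_i\tilde\lambda_i$ s.t. $\sum_{i:e\in p_i}\tilde\lambda_i\le C(e)-\gamma\mathbf{1}_{\{e\in A\}}$ for all $e$, $0\le\tilde\lambda_i\le\lambda_i$; $\Lambda(A,P)=\sum_i\lambda_i-T(A,P)$ and $\Lambda_X(A,P)=\Lambda(A\cup X,P)-\Lambda(X,P)$. Generalized Recursive Greedy algorithm with parameter $a$: the procedure $RG(u_1,u_2,X,i)$ lets $S$ be a shortest (fewest edges) directed $u_1$-$u_2$ path, returns ''infeasible'' if none exists, returns $S$ if $i=0$, and otherwise sets $best:=S$, $r:=\Lambda_X(S,P)$ and, for every tuple $(v_1,\dots,v_{a-1})\in V^{a-1}$, computes sequentially $Q_1=RG(u_1,v_1,X,i-1)$,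 $Q_2=RG(v_1,v_2,X\cup Q_1,i-1)$, …, $Q_a=RG(v_{a-1},u_2,X\cup Q_1\cup\dots\cup Q_{a-1},i-1)$ (skipping the tuple if any call is infeasible), and if $\Lambda_X(Q_1\cup\dots\cup Q_a,P)>r$ sets $r$ to this value and $best:=Q_1\cup\dots\cup Q_a$; it returns $best$. The algorithm outputs $RG(s,t,\emptyset,I)$. *)

(* Defs.v *)
From HB Require Import structures.
From mathcomp Require Import all_boot all_order all_algebra.
From mathcomp Require Import boolp classical_sets reals.
Set Implicit Arguments. Unset Strict Implicit. Unset Printing Implicit Defensive.
Import Order.TTheory GRing.Theory Num.Theory.
Local Open Scope ring_scope.
Local Open Scope classical_set_scope.

(* A directed path from u to v is given
   by the sequence p of vertices after u: u :: p is a G-path ending in v,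
   with no repeated vertex. Its number of edges is size p. *)
Definition dpath (V : finType) (G : rel V) (u v : V) (p : seq V) : bool :=
  [&& path G u p, last u p == v & uniq (u :: p)].

Definition pedges (V : finType) (u : V) (p : seq V) : {set V * V} :=
  [set e | e \in zip (u :: p) p].

Definition acyclic (V : finType) (G : rel V) : Prop :=
  forall (u : V) (p : seq V), path G u p -> last u p = u -> p = [::].

Definition shortest_path_oracle (V : finType) (G : rel V)
    (sp : V -> V -> option (seq V)) : Prop :=
  forall u v, match sp u v with
              | None => forall p, ~~ dpath G u v p
              | Some p => dpath G u v p /\
                          forall q, dpath G u v q -> (size p <= size q)%N
              end.

Definition feasible (R : realType) (V : finType) (G : rel V) (C : V -> V -> R)
    (gamma : R) (k : nat) (P : 'I_k -> {set V * V}) (lam : 'I_k -> R)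
    (A : {set V * V}) (lt : 'I_k -> R) : Prop :=
  (forall e : V * V, G e.1 e.2 ->
     \sum_(i < k | e \in P i) lt i <= C e.1 e.2 - (if e \in A then gamma else 0))
  /\ (forall i, 0 <= lt i <= lam i).

Definition Tval (R : realType) (V : finType) (G : rel V) (C : V -> V -> R)
    (gamma : R) (k : nat) (P : 'I_k -> {set V * V}) (lam : 'I_k -> R)
    (A : {set V * V}) : R :=
  sup [set \sum_(i < k) lt i | lt in feasible G C gamma P lam A].

Definition Lam (R : realType) (V : finType) (G : rel V) (C : V -> V -> R)
    (gamma : R) (k : nat) (P : 'I_k -> {set V * V}) (lam : 'I_k -> R)
    (A : {set V * V}) : R :=
  \sum_(i < k) lam i - Tval G C gamma P lam A.

Definition LamX (R : realType) (V : finType) (G : rel V) (C : V -> V -> R)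
    (gamma : R) (k : nat) (P : 'I_k -> {set V * V}) (lam : 'I_k -> R)
    (X A : {set V * V}) : R :=
  Lam G C gamma P lam (A :|: X) - Lam G C gamma P lam X.

(* Generalized Recursive Greedy RG(u1,u2,X,i) with parameter a.
   sp: the shortest-path subroutine; ord: the order in which the tuples
   (v_1,...,v_{a-1}) in V^{a-1} are scanned. None = "infeasible". *)
Fixpoint RG (R : realType) (V : finType) (G : rel V) (C : V -> V -> R)
    (gamma : R) (k : nat) (P : 'I_k -> {set V * V}) (lam : 'I_k -> R)
    (a : nat) (sp : V -> V -> option (seq V)) (ord : seq ((a.-1).-tuple V))
    (i : nat) (u1 u2 : V) (X : {set V * V}) {struct i} : option {set V * V} :=
  match sp u1 u2 with
  | None => None
  | Some S0 =>
    let S := pedges u1 S0 in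
    match i with
    | 0 => Some S
    | i'.+1 =>
      let fix chain (w : V) (ws : seq V) (Y acc : {set V * V})
          : option {set V * V} :=
        match ws with
        | [::] => Some acc
        | w' :: ws' =>
          match RG G C gamma P lam sp ord i' w w' Y with
          | None => None
          | Some Q => chain w' ws' (Y :|: Q) (acc :|: Q)
          end
        end in
      let step (br : {set V * V} * R) (vs : (a.-1).-tuple V) :=
        match chain u1 (rcons (tval vs) u2) X finset.set0 with
        | None => br
        | Some Q => if br.2 < LamX G C gamma P lam X Q
                    then (Q, LamX G C gamma P lam X Q) else br
        end in
      Some (foldl step (S, LamX G C gamma P lam X S) ord).1
    end
  end.

(* Main.v *)
Require Import Defs.
From HB Require Import structures.
From mathcomp Require Import all_boot all_order all_algebra.
From mathcomp Require Import boolp classical_sets reals.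
From mathcomp Require Import lra zify.
From Stdlib Require Import Btauto.
From mathcomp Require Import finset.
Set Implicit Arguments. Unset Strict Implicit. Unset Printing Implicit Defensive.
Import Order.TTheory GRing.Theory Num.Theory.
Local Open Scope ring_scope.
Section Graph.
Variables (V : finType) (G : rel V).

Lemma walk_uniq : acyclic G -> forall u p, path G u p -> uniq (u :: p).
Proof.
move=> Hac u p; elim: p u => [//|y p IH] u /= /andP[Guy Hp].
have := IH y Hp => /= /andP[-> ->]; rewrite andbT andbT.
apply/negP => Hu.
have Hu' : u \in y :: p by [].
have Hpp : path G u (y :: p) by rewrite /= Guy.
move: Hpp; case/splitPr: Hu' => p1 p2 Hpath.
rewrite -cat_rcons cat_path in Hpath; case/andP: Hpath => Hp1 _.
have := Hac u (rcons p1 u) Hp1; rewrite last_rcons => /(_ erefl).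
by case: p1 {Hp1}.
Qed.

Lemma zip_cat_path (u : V) p q :
  zip (u :: p ++ q) (p ++ q) = zip (u :: p) p ++ zip (last u p :: q) q.
Proof. by elim: p u => [|x p IH] u //=; rewrite IH. Qed.

Lemma pedges_cat (u : V) p q :
  pedges u (p ++ q) = pedges u p :|: pedges (last u p) q.
Proof. by apply/setP => e; rewrite /pedges !inE zip_cat_path mem_cat. Qed.

Lemma pedges_nil (u : V) : pedges u [::] = set0.
Proof. by apply/setP => e; rewrite /pedges !inE. Qed.

Lemma pedges_edge (u : V) p e : path G u p -> e \in pedges u p -> G e.1 e.2.
Proof.
elim: p u => [|x p IH] u /=; first by rewrite pedges_nil inE.
case/andP => Gux Hp; rewrite /pedges inE /= in_cons => /orP[/eqP -> //|He].
by apply: (IH x Hp); rewrite /pedges inE.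
Qed.

Lemma dpathP (u v : V) p : acyclic G ->
  dpath G u v p <-> (path G u p /\ last u p = v).
Proof.
move=> Hac; rewrite /dpath; split.
  by case/and3P => -> /eqP.
by case=> Hp Hl; rewrite Hp Hl eqxx walk_uniq.
Qed.

Fixpoint pieces (M : nat) (w : V) (ws : seq V) (Os : seq (seq V)) : Prop :=
  match ws, Os with
  | nil, nil => True
  | cons w' ws', cons O1 Os' =>
      [/\ path G w O1, last w O1 = w', (size O1 <= M)%N & pieces M w' ws' Os']
  | _, _ => False
  end.

Fixpoint unionOs (w : V) (ws : seq V) (Os : seq (seq V)) : {set V * V} :=
  match ws, Os with
  | cons w' ws', cons O1 Os' => pedges w O1 :|: unionOs w' ws' Os'
  | _, _ => set0
  end.

Lemma split_path M n : forall u O, path G u O -> (size O <= n.+1 * M)%N ->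
  exists vs Os, [/\ size vs = n, pieces M u (rcons vs (last u O)) Os &
                    pedges u O = unionOs u (rcons vs (last u O)) Os].
Proof.
elim: n => [|n IH] u O Hp Hs.
  exists [::], [:: O]; split => //=; first by rewrite mul1n in Hs.
  by rewrite setU0.
set O1 := take M O; set O2 := drop M O.
have E : O = O1 ++ O2 by rewrite cat_take_drop.
have Hp' := Hp; rewrite E cat_path in Hp'; case/andP: Hp' => Hp1 Hp2.
have Hs2 : (size O2 <= n.+1 * M)%N.
  by rewrite size_drop; move: Hs; rewrite mulSn; lia.
have [vs [Os [Hvs Hpc Hun]]] := IH _ _ Hp2 Hs2.
exists (last u O1 :: vs), (O1 :: Os).
have -> : last u O = last (last u O1) O2 by rewrite E last_cat.
have -> : pedges u O = pedges u (O1 ++ O2) by rewrite -E.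
split => /=; first by rewrite Hvs.
  split => //; rewrite size_take; case: ltnP => //.
by rewrite pedges_cat Hun.
Qed.


End Graph.
Section Abstract.
Variables (R : realType) (V : finType) (G : rel V).
Variable F : {set V * V} -> R.
Hypothesis Hmono : forall A B : {set V * V}, A \subset B -> F A <= F B.
Hypothesis Hsub : forall A B S : {set V * V}, A \subset B ->
  F (S :|: B) - F B <= F (S :|: A) - F A.

Definition chainF (rg : V -> V -> {set V * V} -> option {set V * V}) :=
  fix chain (w : V) (ws : seq V) (Y acc : {set V * V})
          : option {set V * V} :=
        match ws with
        | [::] => Some acc
        | w' :: ws' =>
          match rg w w' Y with
          | None => None
          | Some Q => chain w' ws' (Y :|: Q) (acc :|: Q)
          end
        end.

Lemma chain_valid rg :
  (forall u v Y Q, rg u v Y = Some Q ->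
     exists q, [/\ path G u q, last u q = v & Q = pedges u q]) ->
  forall ws w Y acc Z, chainF rg w ws Y acc = Some Z ->
  exists q, [/\ path G w q, last w q = last w ws & Z = acc :|: pedges w q].
Proof.
move=> Hrg; elim=> [|w' ws IH] w Y acc Z /=.
  by case=> <-; exists [::]; rewrite pedges_nil setU0.
case E: (rg w w' Y) => [Q|] // /IH [q2 [Hp2 Hl2 ->]].
have [q1 [Hp1 Hl1 EQ]] := Hrg _ _ _ _ E.
exists (q1 ++ q2); rewrite cat_path last_cat Hl1 Hp1 Hp2 Hl2 pedges_cat Hl1 EQ.
by rewrite setUA.
Qed.

Lemma chain_quality rg (M : nat) (c : R) :
  (forall u v Y O, path G u O -> last u O = v -> (size O <= M)%N ->
     exists Q, rg u v Y = Some Q /\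
       F (pedges u O :|: Y) - F Y <= c * (F (Q :|: Y) - F Y)) ->
  forall ws w Y acc Os, pieces G M w ws Os ->
  exists Q, chainF rg w ws Y acc = Some (acc :|: Q) /\
    F (unionOs w ws Os :|: (Q :|: Y)) - F (Q :|: Y) <= c * (F (Q :|: Y) - F Y).
Proof.
move=> Hrg; elim=> [|w' ws IH] w Y acc [|O1 Os] //=.
  by move=> _; exists set0; rewrite !set0U setU0 subrr mulr0.
case=> Hp Hl Hs Hpc.
have [Q1 [E1 H1]] := Hrg w w' Y O1 Hp Hl Hs; rewrite E1.
have [Qr [E2 H2]] := IH w' (Y :|: Q1) (acc :|: Q1) Os Hpc.
exists (Q1 :|: Qr); rewrite E2 setUA; split => //.
set O1e := pedges w O1; set Or := unionOs w' ws Os.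
set Z := Q1 :|: Qr :|: Y.
have EZ : Qr :|: (Y :|: Q1) = Z.
  by apply/setP => e; rewrite /Z !in_setU; btauto.
rewrite EZ in H2.
have S1 := Hsub O1e (subsetUr (Q1 :|: Qr) Y : Y \subset Z).
have S2 := Hsub Or (subsetUr O1e Z).
have EE : O1e :|: Or :|: Z = Or :|: (O1e :|: Z).
  by apply/setP => e; rewrite !in_setU; btauto.
rewrite EE.
have EQ1 : Q1 :|: Y = Y :|: Q1 by rewrite setUC.
rewrite EQ1 -/O1e in H1; rewrite -/Or in H2.
have -> : c * (F Z - F Y) = c * (F Z - F (Y :|: Q1)) + c * (F (Y :|: Q1) - F Y).
  by rewrite -mulrDr addrA subrK.
lra.
Qed.

Lemma foldl_best (T : eqType) (val : {set V * V} -> R)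
    (cf : T -> option {set V * V}) (Inv : {set V * V} -> Prop) :
  (forall t Q, cf t = Some Q -> Inv Q) ->
  forall l br, br.2 = val br.1 -> Inv br.1 ->
  let r := foldl (fun (br : {set V * V} * R) (t : T) =>
    match cf t with
    | None => br
    | Some Q => if br.2 < val Q then (Q, val Q) else br
    end) br l in
  [/\ r.2 = val r.1, Inv r.1, br.2 <= r.2 &
      forall t Q, t \in l -> cf t = Some Q -> val Q <= r.2].
Proof.
move=> Hcf; elim=> [|t l IH] br Hb Ib /=.
  by split.
set br' := match cf t with None => br | Some Q => _ end.
have [Hb' Ib' Hle Hall] : [/\ br'.2 = val br'.1, Inv br'.1, br.2 <= br'.2 &
   forall Q, cf t = Some Q -> val Q <= br'.2].
  rewrite /br'; case E: (cf t) => [Q|] //.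
    case: ifP => /= H.
      split => //; by [exact: (Hcf _ _ E)|exact: ltW|move=> Q' [<-]].
    split => //; by [exact: lexx|move=> Q' [<-]; rewrite leNgt H].
have [H1 H2 H3 H4] := IH br' Hb' Ib'.
split=> //; first exact: le_trans H3.
move=> t' Q; rewrite in_cons => /orP[/eqP -> |Ht] Hc.
  exact: le_trans (Hall _ Hc) H3.
exact: H4 Ht Hc.
Qed.

End Abstract.
Section RGproof.
Variables (R : realType) (V : finType) (G : rel V) (C : V -> V -> R)
    (gamma : R) (k : nat) (P : 'I_k -> {set V * V})
    (lam : 'I_k -> R) (a : nat) (sp : V -> V -> option (seq V))
    (ord : seq ((a.-1).-tuple V)).
Hypothesis Hirr : irreflexive G.
Hypothesis Hac : acyclic G.
Hypothesis Hsp : shortest_path_oracle G sp.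
Hypothesis Hord : forall t, t \in ord.
Hypothesis Ha : (2 <= a)%N.
Local Notation F := (Lam G C gamma P lam).
Local Notation RGi := (RG G C gamma P lam sp ord).
Hypothesis Hmono : forall A B : {set V * V}, A \subset B -> F A <= F B.
Hypothesis Hsub : forall A B S : {set V * V}, A \subset B ->
  F (S :|: B) - F B <= F (S :|: A) - F A.

Lemma RG_0 u1 u2 X : RGi 0 u1 u2 X =
  match sp u1 u2 with None => None | Some S0 => Some (pedges u1 S0) end.
Proof. by []. Qed.

Lemma RG_S i u1 u2 X : RGi i.+1 u1 u2 X =
  match sp u1 u2 with
  | None => None
  | Some S0 => Some (foldl (fun (br : {set V * V} * R) (vs : (a.-1).-tuple V) =>
      match chainF (fun u v Y => RGi i u v Y) u1 (rcons (tval vs) u2) X finset.set0 with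
      | None => br
      | Some Q => if br.2 < LamX G C gamma P lam X Q
                  then (Q, LamX G C gamma P lam X Q) else br
      end) (pedges u1 S0, LamX G C gamma P lam X (pedges u1 S0)) ord).1
  end.
Proof. by []. Qed.

Lemma RG_valid i : forall u1 u2 X Q, RGi i u1 u2 X = Some Q ->
  exists q, [/\ path G u1 q, last u1 q = u2 & Q = pedges u1 q].
Proof.
elim: i => [|i IH] u1 u2 X Q.
  rewrite RG_0; have := Hsp u1 u2; case: (sp u1 u2) => // S0 [Hd _] [<-].
  by move/(dpathP _ _ _ Hac): Hd => [Hp Hl]; exists S0.
rewrite RG_S; have := Hsp u1 u2; case: (sp u1 u2) => // S0 [Hd _] [<-].
have Hcv := chain_valid IH.
set Inv := fun Q => exists q, [/\ path G u1 q, last u1 q = u2 & Q = pedges u1 q].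
have Hcf : forall (vs : (a.-1).-tuple V) Q', chainF (fun u v Y => RGi i u v Y) u1 (rcons (tval vs) u2) X finset.set0 = Some Q' -> Inv Q'.
  move=> vs Q' H; have [q [Hp Hl ->]] := Hcv _ _ _ _ _ H; exists q; split => //.
    by rewrite Hl last_rcons.
  by rewrite set0U.
have HI0 : Inv (pedges u1 S0).
  by move/(dpathP _ _ _ Hac): Hd => [Hp Hl]; exists S0.
have [_ Hinv _ _] := @foldl_best R V _ (LamX G C gamma P lam X) _ Inv Hcf ord
  (pedges u1 S0, LamX G C gamma P lam X (pedges u1 S0)) erefl HI0.
exact: Hinv.
Qed.

Lemma RG_ge_S i u1 u2 X Q S0 : RGi i u1 u2 X = Some Q -> sp u1 u2 = Some S0 ->
  LamX G C gamma P lam X (pedges u1 S0) <= LamX G C gamma P lam X Q.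
Proof.
move=> H E; case: i H => [|i] H.
  by rewrite RG_0 E in H; case: H => <-; exact: lexx.
rewrite RG_S E in H; case: H => <-.
have [H1 _ H3 _] := @foldl_best R V _ (LamX G C gamma P lam X)
  (fun vs => chainF (fun u v Y => RGi i u v Y) u1 (rcons (tval vs) u2) X finset.set0)
  (fun _ => True) (fun _ _ _ => I) ord
  (pedges u1 S0, LamX G C gamma P lam X (pedges u1 S0)) erefl I.
by rewrite -H1.
Qed.

Lemma small_path u1 u2 O S0 : (size O <= 1)%N -> path G u1 O -> last u1 O = u2 ->
  sp u1 u2 = Some S0 -> O = [::] \/ pedges u1 O = pedges u1 S0.
Proof.
case: O => [|y [|z O]] //=; first by left.
rewrite andbT => _ Guy <- E; right.
have := Hsp u1 y; rewrite E => -[Hd Hmin].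
have := Hmin [:: y]; rewrite /dpath /= Guy eqxx andbT /= inE.
have Hne : u1 != y by apply/eqP => Eu; move: Guy; rewrite Eu Hirr.
rewrite Hne => /(_ erefl).
move=> Hsz; clear E; move: Hd Hsz {Hmin}; case: S0 => [|z [|w S0]] //=.
  by move=> /and3P[_ /= /eqP Eu _]; move: Hne; rewrite Eu eqxx.
by move=> /and3P[_ /= /eqP -> _].
Qed.

Lemma RG_quality i : forall j u1 u2 X O, (j <= i)%N -> path G u1 O ->
  last u1 O = u2 -> (size O <= a ^ j)%N ->
  exists Q, RGi i u1 u2 X = Some Q /\
    F (pedges u1 O :|: X) - F X <= j.+1%:R * (F (Q :|: X) - F X).
Proof.
elim: i => [|i IH] j u1 u2 X O Hj Hp Hl Hs.
all: have [S0 HS0] : exists S0, sp u1 u2 = Some S0.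
all: try (have := Hsp u1 u2; case: (sp u1 u2) => [S0 _|H]; [by exists S0|];
  by have := H O; rewrite (proj2 (dpathP _ _ _ Hac) (conj Hp Hl))).
- have [Q HQ] : exists Q, RGi 0 u1 u2 X = Some Q by rewrite RG_0 HS0; eexists.
  exists Q; split => //.
  move: Hj; rewrite leqn0 => /eqP Ej; subst j.
  rewrite mul1r; have HgS := RG_ge_S HQ HS0; rewrite /LamX in HgS.
  have Hs1 : (size O <= 1)%N by rewrite expn0 in Hs.
  have [->|->] := small_path Hs1 Hp Hl HS0; last by [].
  rewrite pedges_nil set0U subrr subr_ge0; apply: Hmono; exact: subsetUr.
have [Q HQ] : exists Q, RGi i.+1 u1 u2 X = Some Q by rewrite RG_S HS0; eexists.
exists Q; split => //.
case: j Hj Hs => [|j] Hj Hs.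
  rewrite mul1r; have HgS := RG_ge_S HQ HS0; rewrite /LamX in HgS.
  have Hs1 : (size O <= 1)%N by rewrite expn0 in Hs.
  have [->|->] := small_path Hs1 Hp Hl HS0; last by [].
  rewrite pedges_nil set0U subrr subr_ge0; apply: Hmono; exact: subsetUr.
have Hji : (j <= i)%N by [].
have Hs' : (size O <= (a.-1).+1 * a ^ j)%N by rewrite prednK ?(ltnW Ha) // -expnS.
have [vs [Os [Hvs Hpc Hun]]] := split_path Hp Hs'.
rewrite Hl in Hpc Hun.
have Hrg := fun u v Y O' => IH j u v Y O' Hji.
have [Qc [Ec Hc]] := chain_quality Hsub Hrg X finset.set0 Hpc.
have Hvs' : size vs == a.-1 by rewrite Hvs.
set t := Tuple Hvs'.
move: HQ; rewrite RG_S HS0 => -[EQ].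
have [H1 _ _ H4] := @foldl_best R V _ (LamX G C gamma P lam X)
  (fun vs => chainF (fun u v Y => RGi i u v Y) u1 (rcons (tval vs) u2) X finset.set0)
  (fun _ => True) (fun _ _ _ => I) ord
  (pedges u1 S0, LamX G C gamma P lam X (pedges u1 S0)) erefl I.
have := H4 t (finset.set0 :|: Qc) (Hord t) Ec.
rewrite H1 EQ set0U /LamX => Hv.
rewrite Hun.
set U := unionOs u1 (rcons vs u2) Os.
have Hm := Hmono (A := U :|: X) (B := U :|: (Qc :|: X)) (setUS U (subsetUr Qc X)).
have Hc0 : 0 <= j.+1%:R :> R by [].
have Hcm := ler_wpM2l Hc0 Hv.
rewrite -natr1 mulrDl mul1r.
lra.
Qed.
End RGproof.
Section LamFormula.
Variables (R : realType) (V : finType) (G : rel V) (C : V -> V -> R)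
    (gamma : R) (k : nat) (P : 'I_k -> {set V * V}) (lam : 'I_k -> R).
Hypothesis Hgam : 0 < gamma.
Hypothesis HG : forall u v, G u v -> gamma <= C u v.
Hypothesis Hlam : forall i, 0 <= lam i.
Hypothesis Hfeas : forall e : V * V, G e.1 e.2 ->
  \sum_(i < k | e \in P i) lam i <= C e.1 e.2.
Hypothesis Hdisj : forall i j, i != j -> [disjoint P i & P j].
Hypothesis HPG : forall i e, e \in P i -> G e.1 e.2.

Definition hmin i (A : {set V * V}) :=
  \big[Order.min/lam i]_(e in P i :&: A) (C e.1 e.2 - gamma).

Lemma sum_single (f : 'I_k -> R) e i0 : e \in P i0 ->
  \sum_(i < k | e \in P i) f i = f i0.
Proof.
move=> Hi0; rewrite (bigD1 i0) //= big1 ?addr0 // => j /andP[He Hne].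
by move: (disjointFr (Hdisj Hne) He); rewrite Hi0.
Qed.

Lemma sum_none (f : 'I_k -> R) e : (forall i, e \notin P i) ->
  \sum_(i < k | e \in P i) f i = 0.
Proof. by move=> H; rewrite big1 // => i Hi; move: (H i); rewrite Hi. Qed.

Lemma hmin_feasible A : feasible G C gamma P lam A (fun i => hmin i A).
Proof.
split.
  move=> e He; case: (pickP (fun i => e \in P i)) => [i0 Hi0|Hnone].
    rewrite (sum_single _ Hi0); case: ifP => HeA.
      by apply: bigmin_le_cond; rewrite inE Hi0 HeA.
    rewrite subr0; apply: le_trans (bigmin_le_id _ _ _ _) _.
    by have := Hfeas He; rewrite (sum_single _ Hi0).
  rewrite sum_none; last by move=> i; rewrite Hnone.
  have Hc := HG He; case: ifP => _; first by rewrite subr_ge0.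
  by rewrite subr0; exact: le_trans (ltW Hgam) Hc.
move=> i; apply/andP; split; last exact: bigmin_le_id.
apply: le_bigmin => [|e]; first exact: Hlam.
rewrite inE => /andP[He _]; have Hc := HG (HPG He); lra.
Qed.

Lemma hmin_ub A lt : feasible G C gamma P lam A lt -> forall i, lt i <= hmin i A.
Proof.
case=> Hc Hb i; apply: le_bigmin => [|e]; first by case/andP: (Hb i).
rewrite inE => /andP[He HeA].
by have := Hc e (HPG He); rewrite (sum_single _ He) HeA.
Qed.

Lemma Tval_eq A : Tval G C gamma P lam A = \sum_(i < k) hmin i A.
Proof.
rewrite /Tval; set S := (X in sup X).
have Hub : ubound S (\sum_(i < k) hmin i A).
  move=> x [lt Hlt <-]; apply: ler_sum => i _; exact: hmin_ub.
have Hin : S (\sum_(i < k) hmin i A).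
  by exists (fun i => hmin i A) => //; exact: hmin_feasible.
apply/le_anti/andP; split.
  apply: ge_sup => //; by exists (\sum_(i < k) hmin i A).
by apply: ub_le_sup => //; exists (\sum_(i < k) hmin i A).
Qed.

Lemma Lam_eq A : Lam G C gamma P lam A = \sum_(i < k) (lam i - hmin i A).
Proof. by rewrite /Lam Tval_eq sumrB. Qed.

Lemma hminU i (A B : {set V * V}) : hmin i (A :|: B) = Order.min (hmin i A) (hmin i B).
Proof. by rewrite /hmin setIUr bigminU. Qed.

Lemma hmin_mono i (A B : {set V * V}) : A \subset B -> hmin i B <= hmin i A.
Proof. by move/setUidPr => <-; rewrite hminU ge_min lexx. Qed.

Lemma Lam_mono (A B : {set V * V}) : A \subset B ->
  Lam G C gamma P lam A <= Lam G C gamma P lam B.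
Proof.
move=> H; rewrite !Lam_eq; apply: ler_sum => i _.
have Hh := hmin_mono i H; lra.
Qed.

Lemma Lam_sub (A B S : {set V * V}) : A \subset B ->
  Lam G C gamma P lam (S :|: B) - Lam G C gamma P lam B <=
  Lam G C gamma P lam (S :|: A) - Lam G C gamma P lam A.
Proof.
move=> H; rewrite !Lam_eq -!sumrB; apply: ler_sum => i _.
rewrite !hminU; have Hh := hmin_mono i H.
move: Hh; set hA := hmin i A; set hB := hmin i B; set hS := hmin i S => Hh.
case: (leP hS hA) => ?; case: (leP hS hB) => ?; lra.
Qed.

Lemma Lam0 : Lam G C gamma P lam finset.set0 = 0.
Proof.
rewrite Lam_eq big1 // => i _.
by rewrite /hmin setI0 big_set0 subrr.
Qed.

End LamFormula.
Theorem theorem4 (R : realType) (V : finType) (G : rel V) (C : V -> V -> R)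
    (gamma : R) (s t : V) (k : nat) (P : 'I_k -> {set V * V})
    (lam : 'I_k -> R) (a I : nat) (sp : V -> V -> option (seq V))
    (ord : seq ((a.-1).-tuple V)) (Estar : seq V) (d : nat) :
  (* simple directed acyclic graph with nonnegative capacities *)
  irreflexive G ->
  acyclic G ->
  (forall u v, G u v -> 0 <= C u v) ->
  (* s and t are joined by a directed path *)
  (exists p, dpath G s t p) ->
  (* budget 0 < gamma <= min_e C(e) *)
  0 < gamma ->
  (forall u v, G u v -> gamma <= C u v) ->
  (* user paths are directed paths, with nonnegative feasible initial values *)
  (forall i, exists u v p, dpath G u v p /\ P i = pedges u p) ->
  (forall i, 0 <= lam i) ->
  (forall e : V * V, G e.1 e.2 -> \sum_(i < k | e \in P i) lam i <= C e.1 e.2) ->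
  (* user paths pairwise edge-disjoint *)
  (forall i j, i != j -> [disjoint P i & P j]) ->
  (* integer a >= 2 *)
  (2 <= a)%N ->
  (* implementation choices of the algorithm: any shortest-path routine and
     any scanning order of the tuples of V^{a-1} *)
  shortest_path_oracle G sp ->
  perm_eq ord (enum {: (a.-1).-tuple V}) ->
  (* E^* : an s-t path maximizing Lambda(., P), with d edges *)
  dpath G s t Estar ->
  (forall p, dpath G s t p ->
     Lam G C gamma P lam (pedges s p) <= Lam G C gamma P lam (pedges s Estar)) ->
  d = size Estar ->
  (* I >= ceil(log_a d) *)
  (up_log a d <= I)%N ->
  exists Ef : {set V * V},
    RG G C gamma P lam sp ord I s t finset.set0 = Some Ef /\
    (exists p, dpath G s t p /\ Ef = pedges s p) /\
    Lam G C gamma P lam Ef >=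
      ((up_log a d).+1%:R)^-1 * Lam G C gamma P lam (pedges s Estar).
Proof.
move=> Hirr Hac _ _ Hgam HG HPpath Hlam Hfeas Hdisj Ha Hsp Hperm HE _ Hd Hup.
have HPG : forall i e, e \in P i -> G e.1 e.2.
  move=> i e; have [u [v [q [Hq ->]]]] := HPpath i.
  by move/(dpathP _ _ _ Hac): Hq => [Hq _]; exact: pedges_edge.
have Hord : forall t, t \in ord by move=> t'; rewrite (perm_mem Hperm) mem_enum.
have Hmono := Lam_mono Hgam HG Hlam Hfeas Hdisj HPG.
have Hsub := Lam_sub Hgam HG Hlam Hfeas Hdisj HPG.
have H0 := Lam0 Hgam HG Hlam Hfeas Hdisj HPG.
have Hsz : (size Estar <= a ^ up_log a d)%N.
  rewrite -Hd; case: (leqP d 1) => Hd1.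
    have -> : up_log a d = 0%N by apply/eqP; rewrite up_log_eq0 Hd1 orbT.
    by rewrite expn0.
  by case/andP: (up_log_bounds Ha Hd1).
move/(dpathP _ _ _ Hac): HE => [HpE HlE].
have [Q [HQ Hineq]] := RG_quality Hirr Hac Hsp Hord Ha Hmono Hsub finset.set0 Hup HpE HlE Hsz.
exists Q; split => //; split.
  have [q [Hq Hlq ->]] := RG_valid Hac Hsp HQ.
  by exists q; split => //; apply/(dpathP _ _ _ Hac).
rewrite !setU0 H0 !subr0 in Hineq.
by rewrite ler_pdivrMl // ltr0Sn.
Qed.
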